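(* Let $D$ be a commutative $k$-algebra satisfying the sensitive multiplicity condition, let $\sigma$ be an automorphism of $D$ which is not locally algebraic, and let $a\in D$. Then $\operatorname{GKdim}(D(\sigma,a))\geq \operatorname{GKdim}(D)+2$.
   Context: $k$ is a field. The generalized Weyl algebra $D(\sigma,a)$ (for $a$ central) is generated by $D$ and indeterminates $x,y$ with $xd=\sigma(d)x$, $yd=\sigma^{-1}(d)y$ ($d\in D$), $yx=a$, $xy=\sigma(a)$. $\operatorname{GKdim}(B)=\sup_V\limsup_{n\to\infty}\log_n\dim_k(\sum_{i=0}^nV^i)$. An element $r$ of an algebra $B$ is regular if $rb\neq0$ and $br\neq0$ for all $0\neq b\in B$. An algebra $B$ with $\operatorname{GKdim}(B)=d$ satisfies $\mathrm{SM}(V_0,c,d)$, for a finite-dimensional subspace $V_0\subseteq B$ and a constant $c>0$, if for every finite-dimensional subspace $W\subseteq B$ with $V_0r\subseteq W$ for some regular element $r\in B$ one has $\dim(W^m)\geq c\dim(W)m^d$ for all $m\in\mathbb{N}$ (here $W^0=k$). $B$ satisfies the sensitive multiplicity condition if it satisfies $\mathrm{SM}(V_0,c,d)$ for some such $V_0$ and $c$, where $d=\operatorname{GKdim}(B)$. An automorphism $\sigma$ is locally algebraic if every finite-dimensional subspace lies in a finite-dimensional $\sigma$-stable subspace. *)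

(* Defs.v *)
From HB Require Import structures.
From mathcomp Require Import all_boot all_order all_algebra.
From mathcomp Require Import all_classical all_reals.
From mathcomp Require Import ereal topology sequences exp.
From mathcomp Require Import Rstruct.
Set Implicit Arguments. Unset Strict Implicit. Unset Printing Implicit Defensive.
Import Order.TTheory GRing.Theory Num.Theory.
Local Open Scope classical_set_scope.
Local Open Scope ring_scope.

Notation RR := Rdefinitions.R.

Section LinAlg.
Variables (k : fieldType) (B : lalgType k).

(* k-linear span of a finite family: every finite-dimensional subspace is of
   this form. *)
Definition span (s : seq B) : set B :=
  [set v | exists c : 'I_(size s) -> k, v = \sum_(i < size s) c i *: s`_i].

Fixpoint words (s : seq B) (i : nat) : seq B :=
  if i is i'.+1 then [seq u * w | u <- s, w <- words s i'] else [:: 1].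

Definition powsp (s : seq B) (i : nat) : set B := span (words s i).

Definition sumpow (s : seq B) (n : nat) : set B :=
  span (flatten [seq words s i | i <- iota 0 n.+1]).

Definition has_dim (S : set B) (n : nat) : Prop :=
  (exists s : seq B, size s = n /\ span s = S) /\
  (forall s : seq B, span s = S -> (n <= size s)%N).

(* dimension of a finite-dimensional subspace (0 if not finite-dimensional,
   never used in that case) *)
Definition fdim (S : set B) : nat := xget 0%N [set n | has_dim S n].

Definition growth_log (s : seq B) (n : nat) : \bar RR :=
  ((ln (fdim (sumpow s n))%:R / ln (n%:R : RR))%R)%:E.

(* GKdim(B) = sup_V limsup_n log_n dim(sum_{i=0}^n V^i), V ranging over the
   finite-dimensional subspaces, i.e. spans of finite families. *)
Definition GKdim : \bar RR :=
  ereal_sup [set limn_esup (growth_log s) | s in [set: seq B]].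

Definition regular (r : B) : Prop :=
  forall b : B, b != 0 -> r * b != 0 /\ b * r != 0.

Definition SM (v0 : seq B) (c : RR) (d : RR) : Prop :=
  forall w : seq B,
    (exists r : B, regular r /\ forall v, v \in v0 -> span w (v * r)) ->
    forall m : nat,
      c * (fdim (span w))%:R * powR (m%:R : RR) d <= (fdim (powsp w m))%:R.

Definition sensitive_multiplicity : Prop :=
  exists (v0 : seq B) (c d : RR),
     0 < c /\ GKdim = d%:E /\ SM v0 c d.

End LinAlg.

Definition locally_algebraic (k : fieldType) (D : lalgType k) (sigma : D -> D) :=
  forall s : seq D, exists t : seq D,
    span s `<=` span t /\ (forall v, span t v -> span t (sigma v)).

(* B (with iota : D -> B, x, y) is the generalized Weyl algebra D(sigma,a):
   the k-algebra generated by D and x, y subject to the relations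
   x d = sigma(d) x, y d = sigma^{-1}(d) y, y x = a, x y = sigma(a),
   expressed by its universal property (existence and uniqueness of the
   induced algebra morphism to any k-algebra with such data). *)
Definition GWA_rels (k : fieldType) (D : comAlgType k) (C : algType k)
  (sigma sigmainv : D -> D) (a : D) (f : D -> C) (x y : C) : Prop :=
  [/\ forall d, x * f d = f (sigma d) * x,
      forall d, y * f d = f (sigmainv d) * y,
      y * x = f a & x * y = f (sigma a)].

Definition is_GWA (k : fieldType) (D : comAlgType k) (sigma sigmainv : D -> D)
  (a : D) (B : algType k) (iota : {lrmorphism D -> B}) (x y : B) : Prop :=
  GWA_rels sigma sigmainv a iota x y /\
  forall (C : algType k) (f : {lrmorphism D -> C}) (x' y' : C),
    GWA_rels sigma sigmainv a f x' y' ->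
    (exists g : {lrmorphism B -> C},
        (forall d, g (iota d) = f d) /\ g x = x' /\ g y = y') /\
    (forall g1 g2 : {lrmorphism B -> C},
        (forall d, g1 (iota d) = g2 (iota d)) -> g1 x = g2 x -> g1 y = g2 y ->
        forall b, g1 b = g2 b).

(* Main.v *)
Require Import Defs.
From HB Require Import structures.
From mathcomp Require Import all_boot all_order all_algebra.
From mathcomp Require Import all_classical all_reals.
From mathcomp Require Import ereal topology sequences exp.
From mathcomp Require Import Rstruct.
From mathcomp Require Import normedtype zify lra.
Require Import Defs.
Import GRing.Theory Num.Theory.
Local Open Scope ring_scope.

Module PEndo.
#[local] Set Implicit Arguments. #[local] Unset Strict Implicit. #[local] Unset Printing Implicit Defensive.
Import Order.TTheory GRing.Theory Num.Theory.
Local Open Scope ring_scope.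
Section Endo.
Variables (k : fieldType) (D : lalgType k).
Local Notation V := (int -> D).

Definition islin (f : V -> V) :=
  (forall u v, f (u + v) = f u + f v) /\ (forall (c : k) u, f (c *: u) = c *: f u).

Record endo := Endo { app :> V -> V; appP : islin app }.

HB.instance Definition _ := gen_eqMixin endo.
HB.instance Definition _ := gen_choiceMixin endo.

Lemma endoP (S T : endo) : (forall v, S v = T v) -> S = T.
Proof.
case: S T => [s sP] [t tP] /= H.
have e : s = t by apply: funext.
subst t; congr Endo; exact: Prop_irrelevance.
Qed.

Lemma lin0 : islin (fun _ => 0).
Proof. by split => *; rewrite ?addr0 ?scaler0. Qed.
Lemma linN (S : endo) : islin (fun v => - S v).
Proof. by case: S => s [h1 h2]; split => *; rewrite /= ?h1 ?h2 ?opprD ?scalerN. Qed.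
Lemma linD (S T : endo) : islin (fun v => S v + T v).
Proof.
case: S => s [h1 h2]; case: T => t [g1 g2]; split => * /=.
  by rewrite h1 g1 addrACA.
by rewrite h2 g2 scalerDr.
Qed.
Lemma lin1 : islin id.
Proof. by []. Qed.
Lemma linM (S T : endo) : islin (fun v => S (T v)).
Proof.
case: S => s [h1 h2]; case: T => t [g1 g2]; split => * /=.
  by rewrite g1 h1.
by rewrite g2 h2.
Qed.
Lemma linZ (c : k) (S : endo) : islin (fun v => c *: S v).
Proof.
case: S => s [h1 h2]; split => * /=.
  by rewrite h1 scalerDr.
by rewrite h2 !scalerA mulrC.
Qed.

Definition e0 := Endo lin0.
Definition eopp S := Endo (linN S).
Definition eadd S T := Endo (linD S T).
Definition e1 := Endo lin1.
Definition emul S T := Endo (linM S T).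
Definition escale c S := Endo (linZ c S).

Lemma eaddA : associative eadd.
Proof. by move=> *; apply: endoP => v /=; rewrite addrA. Qed.
Lemma eaddC : commutative eadd.
Proof. by move=> *; apply: endoP => v /=; rewrite addrC. Qed.
Lemma eadd0 : left_id e0 eadd.
Proof. by move=> *; apply: endoP => v /=; rewrite add0r. Qed.
Lemma eaddN : left_inverse e0 eopp eadd.
Proof. by move=> *; apply: endoP => v /=; rewrite addNr. Qed.
HB.instance Definition _ := GRing.isZmodule.Build endo eaddA eaddC eadd0 eaddN.


Lemma emulA : associative emul.
Proof. by move=> *; apply: endoP. Qed.
Lemma emul1 : left_id e1 emul.
Proof. by move=> *; apply: endoP. Qed.
Lemma emulr1 : right_id e1 emul.
Proof. by move=> *; apply: endoP. Qed.
Lemma emulDl : left_distributive emul eadd.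
Proof. by move=> *; apply: endoP. Qed.
Lemma emulDr : right_distributive emul eadd.
Proof. by move=> [s [h1 h2]] *; apply: endoP => v /=; rewrite h1. Qed.
Lemma e1_neq0 : e1 != (0 : endo).
Proof.
apply/eqP => h.
have : e1 (fun _ => 1) 0 = (0 : endo) (fun _ => 1) 0 by rewrite h.
by move=> /= /eqP; rewrite oner_eq0.
Qed.
HB.instance Definition _ := GRing.Zmodule_isNzRing.Build endo emulA emul1 emulr1 emulDl emulDr e1_neq0.

Lemma escaleA a b S : escale a (escale b S) = escale (a * b) S.
Proof. by apply: endoP => v /=; rewrite scalerA. Qed.
Lemma escale1 : left_id 1 escale.
Proof. by move=> S; apply: endoP => v /=; rewrite scale1r. Qed.
Lemma escaleDr : right_distributive escale +%R.
Proof. by move=> c S T; apply: endoP => v /=; rewrite scalerDr. Qed.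
Lemma escaleDl S : {morph escale^~ S: a b / a + b}.
Proof. by move=> a b; apply: endoP => v /=; rewrite scalerDl. Qed.
HB.instance Definition _ := GRing.Zmodule_isLmodule.Build k endo escaleA escale1 escaleDr escaleDl.
Lemma escaleAl (c : k) (S T : endo) : c *: (S * T) = (c *: S) * T.
Proof. by apply: endoP. Qed.
HB.instance Definition _ := GRing.Lmodule_isLalgebra.Build k endo escaleAl.
Lemma escaleAr (c : k) (S T : endo) : c *: (S * T) = S * (c *: T).
Proof. by case: S => s [h1 h2]; apply: endoP => v /=; rewrite h2. Qed.
HB.instance Definition _ := GRing.Lalgebra_isAlgebra.Build k endo escaleAr.

Lemma endo_mulE (S T : endo) v : (S * T) v = S (T v). Proof. by []. Qed.
Lemma endo_addE (S T : endo) v : (S + T) v = S v + T v. Proof. by []. Qed.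
Lemma endo_scaleE c (S : endo) v : (c *: S) v = c *: S v. Proof. by []. Qed.
Lemma endo_oneE v : (1 : endo) v = v. Proof. by []. Qed.
End Endo.

End PEndo.
Import PEndo.

Module PLA.
#[local] Set Implicit Arguments. #[local] Unset Strict Implicit. #[local] Unset Printing Implicit Defensive.
Import Order.TTheory GRing.Theory Num.Theory.
Local Open Scope ring_scope.
Section LA.
Variables (k : fieldType) (V : lmodType k).

Fixpoint lc (cs : seq k) (l : seq V) : V :=
  match cs, l with c :: cs', v :: l' => c *: v + lc cs' l' | _, _ => 0 end.

Lemma lc_sum cs l : lc cs l = \sum_(i < size l) cs`_i *: l`_i.
Proof.
elim: l cs => [|v l IH] [|c cs] /=; rewrite ?big_ord0 // big_ord_recl /=.
  by rewrite scale0r add0r big1 // => i _; rewrite scale0r.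
by rewrite IH.
Qed.

Definition sp (l : seq V) (v : V) := exists cs, v = lc cs l.

Lemma spF l v : sp l v <-> exists F : nat -> k, v = \sum_(i < size l) F i *: l`_i.
Proof.
split=> [[cs ->]|[F ->]]; first by exists (nth 0 cs); rewrite lc_sum.
exists (mkseq F (size l)); rewrite lc_sum; apply: eq_bigr => i _.
by rewrite nth_mkseq.
Qed.

Lemma sp0 l : sp l 0. Proof. by exists [::]; case: l. Qed.
Lemma spD l u v : sp l u -> sp l v -> sp l (u + v).
Proof.
move=> /spF[F ->] /spF[G ->]; apply/spF; exists (fun i => F i + G i).
by rewrite -big_split; apply: eq_bigr => i _; rewrite scalerDl.
Qed.
Lemma spZ l c v : sp l v -> sp l (c *: v).
Proof.
move=> /spF[F ->]; apply/spF; exists (fun i => c * F i).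
by rewrite scaler_sumr; apply: eq_bigr => i _; rewrite scalerA.
Qed.
Lemma spN l v : sp l v -> sp l (- v).
Proof. by move=> h; rewrite -scaleN1r; apply: spZ. Qed.
Lemma sp_mem l v : v \in l -> sp l v.
Proof.
elim: l => [//|w l IH]; rewrite inE => /orP[/eqP ->|/IH [cs ->]].
  by exists [:: 1]; case: l {IH} => /=; rewrite scale1r addr0.
by exists (0 :: cs); rewrite /= scale0r add0r.
Qed.
Lemma sp_sum l I (r : seq I) (P : pred I) (F : I -> V) :
  (forall i, P i -> sp l (F i)) -> sp l (\sum_(i <- r | P i) F i).
Proof.
move=> h; apply: (big_ind (sp l)); [exact: sp0| exact: spD| exact: h].
Qed.
Lemma sp_sub l t u : (forall v, v \in l -> sp t v) -> sp l u -> sp t u.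
Proof.
move=> h /spF[F ->]; apply: sp_sum => i _; apply: spZ; apply: h.
exact: mem_nth.
Qed.
Lemma sp_nil v : sp [::] v -> v = 0.
Proof. by case=> [[|c cs] ->]. Qed.

Definition free (l : seq V) :=
  forall cs, lc cs l = 0 -> forall i, (i < size l)%N -> cs`_i = 0.

Lemma free_nil : free [::]. Proof. by []. Qed.

Lemma free_cons l v : free l -> ~ sp l v -> free (v :: l).
Proof.
move=> fl nv [|c cs] //= h0 i hi; first by rewrite nth_nil.
have c0 : c = 0.
  apply/eqP; apply/negPn/negP => cn; apply: nv.
  have -> : v = - c^-1 *: lc cs l.
    have e : c *: v = - lc cs l by apply/eqP; rewrite -addr_eq0 h0.
    by rewrite scaleNr -scalerN -e scalerA mulVf // scale1r.
  by apply: spZ; exists cs.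
move: h0; rewrite c0 scale0r add0r => h0.
by case: i hi => [|i] //= hi; apply: fl.
Qed.

Lemma basis_ex s : exists b, free b /\ (forall v, sp b v <-> sp s v).
Proof.
elim: s => [|v s [b [fb eb]]]; first by exists [::]; split => //; exact: free_nil.
have sub1 : forall u, sp s u -> sp (v :: s) u.
  move=> u; apply: sp_sub => w hw; apply: sp_mem; by rewrite inE hw orbT.
case: (pselect (sp b v)) => hv.
  exists b; split => // u; split => [/eb /sub1 //|]; apply: sp_sub => w.
  by rewrite inE => /orP[/eqP ->//|/sp_mem/eb].
exists (v :: b); split; first exact: free_cons.
move=> u; split; apply: sp_sub => w; rewrite inE => /orP[/eqP ->|hw].
- by apply: sp_mem; rewrite inE eqxx.
- by apply: sub1; apply/eb; apply: sp_mem.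
- by apply: sp_mem; rewrite inE eqxx.
- apply: (@sp_sub b); last by apply/eb; apply: sp_mem.
  by move=> z hz; apply: sp_mem; rewrite inE hz orbT.
Qed.

Lemma steinitz l t : free l -> (forall v, v \in l -> sp t v) -> (size l <= size t)%N.
Proof.
move=> fl hl; rewrite leqNgt; apply/negP => hlt.
set p := size l; set q := size t.
have : forall i : 'I_p, exists F : nat -> k, l`_i = \sum_(j < q) F j *: t`_j.
  by move=> i; apply/spF; apply: hl; apply: mem_nth.
case/choice => G hG.
pose M := \matrix_(i < p, j < q) G i j.
have rk : (0 < \rank (kermx M))%N.
  by rewrite mxrank_ker subn_gt0; apply: leq_ltn_trans (rank_leq_col M) hlt.
have hK0 : kermx M != 0 by rewrite -mxrank_eq0 -lt0n.
have [i0 [j0 hne]] : exists i0 j0, kermx M i0 j0 != 0.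
  case: (pselect (exists i0 j0, kermx M i0 j0 != 0)) => // hn; exfalso.
  move/negP: hK0; apply; apply/eqP/matrixP => i j; rewrite [X in _ = X]mxE.
  by case: (eqVneq (kermx M i j) 0) => // h; exfalso; apply: hn; exists i, j.
pose v := row i0 (kermx M).
have hv : v *m M = 0 by rewrite -row_mul mulmx_ker row0.
pose cs := [seq v 0 i | i <- enum 'I_p].
have hcs : forall i : 'I_p, cs`_i = v 0 i.
  by move=> i; rewrite (nth_map i) ?size_enum_ord // nth_ord_enum.
have : lc cs l = 0.
  rewrite lc_sum.
  transitivity (\sum_(i < p) \sum_(j < q) (v 0 i * G i j) *: t`_j).
    apply: eq_bigr => i _; rewrite hcs hG scaler_sumr.
    by apply: eq_bigr => j _; rewrite scalerA.
  rewrite exchange_big /=; apply: big1 => j _.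
  rewrite -scaler_suml.
  have -> : \sum_(i < p) v 0 i * G i j = (v *m M) 0 j.
    by rewrite !mxE; apply: eq_bigr => i _; rewrite !mxE.
  by rewrite hv mxE scale0r.
move/fl => /(_ j0 (ltn_ord j0)); rewrite hcs mxE => h.
by move: hne; rewrite h eqxx.
Qed.
End LA.

Section LAmap.
Variables (k : fieldType) (V W : lmodType k) (f : V -> W).
Hypotheses (fD : forall u v, f (u + v) = f u + f v) (fZ : forall (c : k) v, f (c *: v) = c *: f v).
Lemma f0 : f 0 = 0.
Proof. by rewrite -(scale0r (0 : V)) fZ scale0r. Qed.
Lemma lc_map cs l : f (lc cs l) = lc cs (map f l).
Proof.
elim: l cs => [|v l IH] [|c cs] /=; rewrite ?f0 //.
by rewrite fD fZ IH.
Qed.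
Lemma sp_map l v : sp l v -> sp (map f l) (f v).
Proof. by case=> cs ->; exists cs; rewrite lc_map. Qed.
End LAmap.


Section Dim.
Variables (k : fieldType) (B : lalgType k).

Lemma spanE (s : seq B) : span s = sp s.
Proof.
apply: funext => v; apply: propext; split.
  case=> c ->; apply/spF.
  exists (fun n => if insub n is Some i then c i else 0).
  by apply: eq_bigr => i _; rewrite valK.
by case/spF => F ->; exists (fun i => F i).
Qed.

Lemma has_dim_uniq (S : set B) n m : has_dim S n -> has_dim S m -> n = m.
Proof.
move=> [[t [st et]] hn] [[u [su eu]] hm].
apply/eqP; rewrite eqn_leq; apply/andP; split.
  by rewrite -su; apply: hn.
by rewrite -st; apply: hm.
Qed.

Lemma fdim_basis (s b : seq B) : free b -> (forall v, sp b v <-> sp s v) ->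
  fdim (span s) = size b.
Proof.
move=> fb eb.
have hd : has_dim (span s) (size b).
  split.
    exists b; split => //; rewrite !spanE; apply: funext => v; apply: propext.
    exact: eb.
  move=> t et; apply: steinitz => // v /sp_mem /eb.
  by rewrite -!spanE -et.
symmetry; apply: (has_dim_uniq hd); rewrite /fdim.
have := @xgetPex _ 0%N [set n | has_dim (span s) n]; apply.
by exists (size b).
Qed.

Lemma fdim_ex (s : seq B) : exists b, [/\ free b, size b = fdim (span s) &
  forall v, sp b v <-> sp s v].
Proof.
case: (basis_ex s) => b [fb eb]; exists b; split => //.
by rewrite (fdim_basis fb eb).
Qed.

Lemma fdim_ge (s l : seq B) : free l -> (forall v, v \in l -> sp s v) ->
  (size l <= fdim (span s))%N.
Proof.
move=> fl hl; case: (fdim_ex s) => b [fb <- eb].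
by apply: steinitz => // v /hl /eb.
Qed.

Lemma fdim_mono (s t : seq B) : (forall u, sp s u -> sp t u) ->
  (fdim (span s) <= fdim (span t))%N.
Proof.
move=> h; case: (fdim_ex s) => b [fb <- eb].
by apply: fdim_ge => // v /sp_mem /eb /h.
Qed.

Lemma fdim_strict (s t : seq B) v : (forall u, sp s u -> sp t u) ->
  sp t v -> ~ sp s v -> (fdim (span s) < fdim (span t))%N.
Proof.
move=> h hv nv; case: (fdim_ex s) => b [fb <- eb].
have -> : (size b).+1 = size (v :: b) by [].
apply: fdim_ge.
  by apply: free_cons => // /eb.
by move=> w; rewrite inE => /orP[/eqP -> //| /sp_mem /eb /h].
Qed.
End Dim.

Section FreeCat.
Variables (k : fieldType) (V W : lmodType k) (f : V -> W).
Hypotheses (fD : forall u v, f (u + v) = f u + f v) (fZ : forall (c : k) v, f (c *: v) = c *: f v).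

Lemma lc_cat cs (l1 l2 : seq V) :
  lc cs (l1 ++ l2) = lc (take (size l1) cs) l1 + lc (drop (size l1) cs) l2.
Proof.
elim: l1 cs => [|v l1 IH] [|c cs] /=; rewrite ?add0r ?drop0 //.
by rewrite IH addrA.
Qed.

Lemma lc0 cs (l : seq V) : (forall i, (i < size l)%N -> cs`_i = 0) -> lc cs l = 0.
Proof.
move=> h; rewrite lc_sum; apply: big1 => i _; by rewrite h ?scale0r.
Qed.

Lemma lc_zero cs (l : seq W) : (forall v, v \in l -> v = 0) -> lc cs l = 0.
Proof.
move=> h; rewrite lc_sum; apply: big1 => i _; by rewrite (h l`_i) ?scaler0 // mem_nth.
Qed.

Lemma free_cat_proj (l1 l2 : seq V) : free l2 -> free (map f l1) ->
  (forall v, v \in l2 -> f v = 0) -> free (l1 ++ l2).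
Proof.
move=> f2 f1 h0 cs; rewrite lc_cat => hc.
have hA : forall i, (i < size l1)%N -> (take (size l1) cs)`_i = 0.
  move=> i hi; apply: (f1 _ _ i); last by rewrite size_map.
  move/(congr1 f): hc.
  rewrite fD !(lc_map fD fZ) (f0 fZ) (@lc_zero _ (map f l2)) ?addr0 //.
  by move=> w /mapP[v hv ->]; apply: h0.
move: hc; rewrite (lc0 hA) add0r => /f2 hB i.
rewrite size_cat => hi; case: (ltnP i (size l1)) => hi1.
  by rewrite -(nth_take _ hi1); apply: hA.
have := hB (i - size l1)%N; rewrite nth_drop subnKC //; apply.
by rewrite ltn_subLR.
Qed.
End FreeCat.

End PLA.
Import PLA.

Module PRep.
#[local] Set Implicit Arguments. #[local] Unset Strict Implicit. #[local] Unset Printing Implicit Defensive.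
Import Order.TTheory GRing.Theory Num.Theory.
Local Open Scope ring_scope.
Section Rep.
Variables (k : fieldType) (D : comAlgType k)
  (sigma : {lrmorphism D -> D}) (sigmainv : D -> D)
  (sigmaK : cancel sigma sigmainv) (sigmainvK : cancel sigmainv sigma) (a : D).

Definition good (g : D -> D) :=
  [/\ forall u v, g (u - v) = g u - g v, forall u v, g (u * v) = g u * g v,
      forall (c : k) u, g (c *: u) = c *: g u & g 1 = 1].

Lemma good0 g : good g -> g 0 = 0.
Proof. by case=> hB _ _ _; have := hB 0 0; rewrite subrr => ->; rewrite subrr. Qed.
Lemma goodD g u v : good g -> g (u + v) = g u + g v.
Proof.
move=> hg; have h0 := good0 hg; case: hg => hB _ _ _.
have hN : forall w, g (- w) = - g w by move=> w; rewrite -sub0r hB h0 sub0r.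
by rewrite -[v]opprK hB !hN !opprK.
Qed.

Lemma good_sigma : good sigma.
Proof. by split => *; rewrite ?rmorphB ?rmorphM ?linearZ ?rmorph1. Qed.

Lemma good_sigmainv : good sigmainv.
Proof.
split => [u v|u v|c u|].
- by rewrite -{1}(sigmainvK u) -{1}(sigmainvK v) -rmorphB sigmaK.
- by rewrite -{1}(sigmainvK u) -{1}(sigmainvK v) -rmorphM sigmaK.
- rewrite -{1}(sigmainvK u).
  have -> : c *: sigma (sigmainv u) = sigma (c *: sigmainv u) by rewrite linearZ.
  by rewrite sigmaK.
- by rewrite -{1}(rmorph1 sigma) sigmaK.
Qed.

Lemma good_iter g n : good g -> good (iter n g).
Proof.
case=> gB gM gZ g1; elim: n => [|n [IB IM IZ I1]] //=; split => *.
by rewrite /= IB gB. by rewrite /= IM gM. by rewrite /= IZ gZ. by rewrite /= I1 g1.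
Qed.

Definition spow (z : int) (d : D) : D :=
  match z with Posz n => iter n sigma d | Negz n => iter n.+1 sigmainv d end.

Lemma good_spow z : good (spow z).
Proof. case: z => n; apply: good_iter; [exact: good_sigma|exact: good_sigmainv]. Qed.

Lemma spowS z d : spow (z + 1) d = spow z (sigma d).
Proof.
case: z => [n|[|n]].
- by rewrite -[_ + 1]/(Posz (n + 1)) addn1 /= -iterSr.
- by rewrite /= sigmaK.
- have h : forall m e, sigmainv (iter m sigmainv (sigma e)) = iter m sigmainv e.
    by move=> m e; rewrite -iterS iterSr sigmaK.
  by rewrite /= subn1 /= h.
Qed.

Lemma spowN_inv (j : nat) e : iter j sigma (spow (- j%:Z) e) = e.
Proof.
case: j => [//|j].
have -> : spow (- (j.+1)%:Z) e = iter j.+1 sigmainv e by [].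
suff h : forall n e, iter n sigma (iter n sigmainv e) = e by rewrite h.
by elim=> [//|n IH] e'; rewrite iterSr iterS sigmainvK IH.
Qed.
End Rep.

Section Rep2.
Variables (k : fieldType) (D : comAlgType k)
  (sigma : {lrmorphism D -> D}) (sigmainv : D -> D) (a : D).
Variable hinv : good sigmainv.

Local Notation spow := (spow sigma sigmainv).

Lemma good_spow' z : good (spow z).
Proof. case: z => n; apply: good_iter => //; exact: good_sigma. Qed.

Definition fapp (d : D) (F : int -> D) : int -> D := fun i => spow i d * F i.
Lemma fapp_lin d : islin (fapp d).
Proof.
split=> [F G|c F]; apply: funext => i; rewrite /fapp /=.
  by rewrite mulrDr.
by rewrite !scalrfctE /= scalerAr.
Qed.

Definition fmap (h : good sigmainv) (d : D) : endo D := Endo (fapp_lin d).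

Lemma fmapE d F i : fmap hinv d F i = spow i d * F i. Proof. by []. Qed.

Lemma fmap_zmod : zmod_morphism (fmap hinv).
Proof.
move=> u v; apply: endoP => F; apply: funext => i /=.
by rewrite /fapp; case: (good_spow' i) => -> _ _ _; rewrite mulrBl.
Qed.
HB.instance Definition _ := GRing.isZmodMorphism.Build D (endo D) (fmap hinv) fmap_zmod.

Lemma fmap_mult : multiplicative (fmap hinv).
Proof.
split => [u v|]; apply: endoP => F; apply: funext => i /=; rewrite /fapp;
  case: (good_spow' i) => _ hM _ h1.
  by rewrite hM mulrA.
by rewrite h1 mul1r.
Qed.
HB.instance Definition _ := GRing.isMultiplicative.Build D (endo D) (fmap hinv) fmap_mult.

Lemma fmap_scal : scalable (fmap hinv).
Proof.
move=> c u; apply: endoP => F; apply: funext => i /=; rewrite /fapp.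
by case: (good_spow' i) => _ _ hZ _; rewrite !scalrfctE /= hZ scalerAl.
Qed.
HB.instance Definition _ := GRing.isScalable.Build k D (endo D) *:%R (fmap hinv) fmap_scal.

Definition fm : {lrmorphism D -> endo D} := fmap hinv.


Definition xs_app (F : int -> D) : int -> D := fun i => F (i + 1).
Lemma xs_lin : islin xs_app.
Proof. by split=> [F G|c F]; apply: funext => i; rewrite /xs_app ?scalrfctE. Qed.
Definition xs : endo D := Endo xs_lin.

Definition ys_app (F : int -> D) : int -> D := fun i => spow i a * F (i - 1).
Lemma ys_lin : islin ys_app.
Proof.
split=> [F G|c F]; apply: funext => i; rewrite /ys_app ?scalrfctE /=.
  by rewrite mulrDr.
by rewrite scalerAr.
Qed.
Definition ys : endo D := Endo ys_lin.

Variables (sigmaK : cancel sigma sigmainv) (sigmainvK : cancel sigmainv sigma).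
Lemma spowV i d : spow i (sigmainv d) = spow (i - 1) d.
Proof. rewrite -{1}(subrK 1 i) (spowS sigmaK) (sigmainvK d) //. Qed.

Lemma gwa_rels : GWA_rels sigma sigmainv a fm xs ys.
Proof.
split.
- move=> d; apply: endoP => F; apply: funext => i /=.
  by rewrite /xs_app /fapp spowS.
- move=> d; apply: endoP => F; apply: funext => i /=.
  by rewrite /ys_app /fapp spowV mulrCA.
- apply: endoP => F; apply: funext => i /=.
  by rewrite /ys_app /xs_app /fapp subrK.
- apply: endoP => F; apply: funext => i /=.
  by rewrite /ys_app /xs_app /fapp addrK spowS.
Qed.

Lemma xsX (n : nat) F (i : int) : (xs ^+ n) F i = F (i + n).
Proof.
elim: n F i => [|n IH] F i; first by rewrite expr0 addr0.
by rewrite exprS endo_mulE /= /xs_app IH intS addrA.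
Qed.

End Rep2.

Section Psi.
Variables (k : fieldType) (D : comAlgType k)
  (sigma : {lrmorphism D -> D}) (sigmainv : D -> D) (hinv : good sigmainv)
  (sigmaK : cancel sigma sigmainv) (sigmainvK : cancel sigmainv sigma).
Variables (B : algType k) (iota : {lrmorphism D -> B}) (x : B)
  (g : {lrmorphism B -> endo D})
  (giota : forall d, g (iota d) = fm sigma hinv d) (gx : g x = xs D).

Definition delta0 : int -> D := fun z => if z == 0 then 1 else 0.
Definition psi (j : nat) (b : B) : D := iter j sigma (g b delta0 (- j%:Z)).

Lemma psiD j u v : psi j (u + v) = psi j u + psi j v.
Proof.
by rewrite /psi raddfD endo_addE /= goodD //; apply: good_iter; exact: good_sigma.
Qed.

Lemma psiZ j (c : k) u : psi j (c *: u) = c *: psi j u.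
Proof.
rewrite /psi linearZ endo_scaleE /= scalrfctE /=.
by case: (good_iter j (good_sigma sigma)) => _ _ hZ _; rewrite hZ.
Qed.

Lemma psi_phi j i e : psi j (iota e * x ^+ i) = if i == j then e else 0.
Proof.
rewrite /psi rmorphM rmorphXn.
have -> : g (iota e) * g x ^+ i = fm sigma hinv e * xs D ^+ i by rewrite -giota -gx.
rewrite endo_mulE.
rewrite [fm _ _ _ _ _]/= /fapp xsX /delta0.
have -> : (- j%:Z + i%:Z == 0) = (i == j).
  by rewrite addrC subr_eq0 eqz_nat.
case: ifP => _; first by rewrite mulr1 spowN_inv.
by rewrite mulr0 good0 //; apply: good_iter; exact: good_sigma.
Qed.
End Psi.

End PRep.
Import PRep.

Module PComb.
#[local] Set Implicit Arguments. #[local] Unset Strict Implicit. #[local] Unset Printing Implicit Defensive.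
Import Order.TTheory GRing.Theory Num.Theory.
Local Open Scope ring_scope.
Section Words.
Variables (k : fieldType) (B : algType k).

Lemma words_mul (s : seq B) a b u w :
  u \in words s a -> w \in words s b -> u * w \in words s (a + b).
Proof.
elim: a u => [|a IH] u /=.
  by rewrite inE => /eqP -> hw; rewrite mul1r.
case/allpairsP => [[p1 p2] [/= hp1 hp2 ->]] hw.
by rewrite -mulrA; apply: allpairs_f => //; apply: IH.
Qed.

Lemma sp_mul (l1 l2 l3 : seq B) p q :
  (forall u w, u \in l1 -> w \in l2 -> sp l3 (u * w)) ->
  sp l1 p -> sp l2 q -> sp l3 (p * q).
Proof.
move=> h /spF[F ->] /spF[G ->].
rewrite mulr_suml; apply: sp_sum => i _.
rewrite mulr_sumr; apply: sp_sum => j _.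
rewrite -scalerAl -scalerAr; apply: spZ; apply: spZ.
by apply: h; apply: mem_nth.
Qed.

Lemma spW_mul (s : seq B) a b p q :
  sp (words s a) p -> sp (words s b) q -> sp (words s (a + b)) (p * q).
Proof.
by apply: sp_mul => u w hu hw; apply: sp_mem; apply: words_mul.
Qed.
End Words.

Section Comb.
Variables (k : fieldType) (D : comAlgType k) (sigma : {lrmorphism D -> D})
  (B : algType k) (iota : {lrmorphism D -> B}) (x : B)
  (hx : forall d, x * iota d = iota (sigma d) * x) (uU : seq D) (h1 : 1 \in uU).

Definition sB := x :: map iota uU.
Local Notation W n := (sp (words sB n)).

Lemma W_cast n m p : W n p -> n = m -> W m p.
Proof. by move=> h <-. Qed.

Lemma W1_mem v : v \in sB -> W 1 v.
Proof.
move=> hv; apply: sp_mem; rewrite -[v]mulr1; apply: allpairs_f => //.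
by rewrite inE.
Qed.

Lemma W1x : W 1 x. Proof. by apply: W1_mem; rewrite inE eqxx. Qed.
Lemma W1iota u : u \in uU -> W 1 (iota u).
Proof. by move=> hu; apply: W1_mem; rewrite inE map_f ?orbT. Qed.

Lemma W_S n p : W n p -> W n.+1 p.
Proof.
move=> h; rewrite -[p]mul1r -(rmorph1 iota); apply: (W_cast (spW_mul (W1iota h1) h)).
by rewrite add1n.
Qed.
Lemma W_mono n m p : (n <= m)%N -> W n p -> W m p.
Proof.
move=> /subnK <-; elim: (m - n)%N => [//|i IH] h.
by rewrite addSn; apply: W_S; apply: IH.
Qed.

Lemma W_x n : W n (x ^+ n).
Proof.
elim: n => [|n IH]; first by rewrite expr0; apply: sp_mem; rewrite inE.
by rewrite exprS; apply: (W_cast (spW_mul W1x IH)); rewrite add1n.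
Qed.

Lemma W_iota m e : e \in words uU m -> W m (iota e).
Proof.
elim: m e => [|m IH] e /=.
  by rewrite inE => /eqP ->; rewrite rmorph1; apply: sp_mem; rewrite inE.
case/allpairsP => [[u w] [/= hu hw ->]].
rewrite rmorphM; apply: (@W_cast _ m.+1 _ (spW_mul (W1iota hu) (IH _ hw))).
by rewrite add1n.
Qed.

Fixpoint L (j : nat) : seq D := if j is j'.+1 then uU ++ map sigma (L j') else uU.

Lemma split_words j m e : e \in words (L j.+1) m ->
  exists m0 m1 e0 e1, [/\ (m0 + m1)%N = m, e0 \in words uU m0,
    e1 \in words (L j) m1 & e = e0 * sigma e1].
Proof.
elim: m e => [|m IH] e /=.
  rewrite inE => /eqP ->; exists 0%N, 0%N, 1, 1; split => //; first by rewrite inE.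
  by rewrite inE.
  by rewrite rmorph1 mulr1.
case/allpairsP => [[u w] [/= hu hw ->]].
case: (IH _ hw) => m0 [m1 [e0 [e1 [hm he0 he1 ->]]]].
move: hu; rewrite mem_cat => /orP[hu|/mapP[u' hu' ->]].
  exists m0.+1, m1, (u * e0), e1; split.
  - by rewrite addSn hm.
  - by apply: allpairs_f.
  - by [].
  - by rewrite mulrA.
exists m0, m1.+1, e0, (u' * e1); split.
- by rewrite addnS hm.
- by [].
- by apply: allpairs_f.
- by rewrite rmorphM mulrCA.
Qed.

Lemma claim j : forall m e, e \in words (L j) m -> W (m + j) (iota e * x ^+ j).
Proof.
elim: j => [|j IH] m e he.
  by rewrite expr0 mulr1 addn0; apply: W_iota.
case: (split_words he) => m0 [m1 [e0 [e1 [hm he0 he1 ->]]]].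
have -> : iota (e0 * sigma e1) * x ^+ j.+1 = (iota e0 * x) * (iota e1 * x ^+ j).
  by rewrite rmorphM exprS !mulrA; congr (_ * _); rewrite -!mulrA hx.
apply: (W_cast (spW_mul (W_cast (spW_mul (W_iota he0) W1x) (erefl _)) (IH _ _ he1))).
by rewrite -hm addn1 addSn addnA addnS.
Qed.

Lemma claim_sp j m e : sp (words (L j) m) e -> W (m + j) (iota e * x ^+ j).
Proof.
move=> h.
have hD : forall u v, iota (u + v) * x ^+ j = iota u * x ^+ j + iota v * x ^+ j.
  by move=> u v; rewrite rmorphD mulrDl.
have hZ : forall (c : k) v, iota (c *: v) * x ^+ j = c *: (iota v * x ^+ j).
  by move=> c v; rewrite linearZ /= scalerAl.
have := sp_map hD hZ h; apply: sp_sub => v /mapP[e' he' ->].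
exact: claim.
Qed.

Lemma uU_L j v : v \in uU -> sp (L j) v.
Proof.
case: j => [|j] hv; apply: sp_mem => //=.
by rewrite mem_cat hv.
Qed.

Lemma sigma_sp (l : seq D) v : sp l v -> sp (map sigma l) (sigma v).
Proof.
apply: sp_map => [u w|c u]; [exact: rmorphD | exact: linearZ].
Qed.

Lemma L_sub j v : sp (L j) v -> sp (L j.+1) v.
Proof.
elim: j v => [|j IH] v; apply: sp_sub => w.
  by move=> hw; apply: sp_mem; rewrite /= mem_cat hw.
rewrite /= mem_cat => /orP[hw|/mapP[w' hw' ->]].
  by apply: sp_mem; rewrite mem_cat hw.
have := sigma_sp (IH _ (sp_mem hw')); apply: sp_sub => z hz.
by apply: sp_mem; rewrite /= mem_cat hz orbT.
Qed.

Lemma sigma_L j v : sp (L j) v -> sp (L j.+1) (sigma v).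
Proof.
move=> /sigma_sp; apply: sp_sub => z hz.
by apply: sp_mem; rewrite /= mem_cat hz orbT.
Qed.

Variable s0 : seq D.
Hypothesis hs0 : forall v, v \in s0 -> v \in uU.
Hypothesis hNLA : forall t : seq D, (forall v, v \in s0 -> sp t v) ->
  (forall v, sp t v -> sp t (sigma v)) -> False.

Lemma L_strict j : exists v, sp (L j.+1) v /\ ~ sp (L j) v.
Proof.
case: (pselect (exists v, sp (L j.+1) v /\ ~ sp (L j) v)) => // hn.
exfalso; apply: (hNLA (t := L j)).
  by move=> v /hs0 /uU_L.
move=> v /sigma_L hv; case: (pselect (sp (L j) (sigma v))) => // hv'.
by exfalso; apply: hn; exists (sigma v).
Qed.

Lemma fdim_L j : (j < fdim (span (L j)))%N.
Proof.
elim: j => [|j IH].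
  apply: (@leq_trans (fdim (span ([::] : seq D))).+1) => //.
  apply: (fdim_strict (v := 1)).
  - by move=> u /sp_nil ->; apply: sp0.
  - exact: sp_mem.
  - by move/sp_nil/eqP; rewrite oner_eq0.
case: (L_strict j) => v [hv nv].
by apply: leq_ltn_trans IH _; apply: (fdim_strict (v := v)) => //; apply: L_sub.
Qed.


Variable psi : nat -> B -> D.
Hypotheses (psiD : forall j u v, psi j (u + v) = psi j u + psi j v)
  (psiZ : forall j (c : k) u, psi j (c *: u) = c *: psi j u)
  (psi_phi : forall j i e, psi j (iota e * x ^+ i) = if i == j then e else 0).

Fixpoint T (bs : nat -> seq D) (J : nat) : seq B :=
  if J is J'.+1 then map (fun e => iota e * x ^+ J') (bs J') ++ T bs J' else [::].

Lemma T_mem bs J v : v \in T bs J ->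
  exists i e, [/\ (i < J)%N, v = iota e * x ^+ i & e \in bs i].
Proof.
elim: J => [//|J IH] /=; rewrite mem_cat => /orP[/mapP[e he ->]|/IH].
  by exists J, e; split.
by case=> i [e [hi -> he]]; exists i, e; split => //; apply: ltnW.
Qed.

Lemma free_T bs J : (forall j, free (bs j)) -> free (T bs J).
Proof.
move=> hb; elim: J => [|J IH] /=; first exact: free_nil.
apply: (free_cat_proj (psiD J) (psiZ J)) => //.
  rewrite -map_comp (@eq_map _ _ _ id); first by rewrite map_id.
  by move=> e /=; rewrite psi_phi eqxx.
move=> v /T_mem [i [e [hi -> _]]]; rewrite psi_phi.
by case: eqP hi => // ->; rewrite ltnn.
Qed.

Lemma size_T bs J : size (T bs J) = (\sum_(j < J) size (bs j))%N.
Proof.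
elim: J => [|J IH] /=; first by rewrite big_ord0.
by rewrite size_cat size_map IH big_ord_recr /= addnC.
Qed.

Lemma T_W bs m J : (forall j v, v \in bs j -> sp (words (L j) m) v) ->
  forall v, v \in T bs J -> W (m + J) v.
Proof.
move=> hb v /T_mem [i [e [hi -> he]]].
apply: W_mono (claim_sp (hb _ _ he)).
by rewrite leq_add2l ltnW.
Qed.

End Comb.

End PComb.
Import PComb.

Module PAn.
#[local] Set Implicit Arguments. #[local] Unset Strict Implicit. #[local] Unset Printing Implicit Defensive.
Import Order.TTheory GRing.Theory Num.Theory.
Local Open Scope classical_set_scope.
Local Open Scope ring_scope.
Lemma limsup_lb (u : nat -> \bar RR) (L K : RR) :
  (forall N, (4 <= N)%N -> ((L - K / ln (N%:R : RR))%:E <= u N)%E) ->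
  (L%:E <= limn_esup u)%E.
Proof.
move=> h; rewrite /limn_esup /limf_esup.
apply: le_ereal_inf_tmp => _ [V hV <-].
apply/lee_addgt0Pr => e e0.
case: hV => N0 _ hN0.
pose n := maxn (maxn N0 4) (Num.truncn (expR (K / e))).+1.
have hn4 : (4 <= n)%N by rewrite /n leq_max leq_max leqnn orbT.
have hnV : V n by apply: hN0; rewrite /= /n leq_max leq_max leqnn.
have npos : (0 : RR) < n%:R by rewrite ltr0n; apply: leq_trans hn4.
have lnpos : (0 : RR) < ln (n%:R : RR).
  by apply: ln_gt0; rewrite ltr1n; apply: leq_trans hn4.
have hK : K / ln (n%:R : RR) <= e.
  rewrite ler_pdivrMr // -ler_pdivrMl // mulrC.
  rewrite -{1}(expRK (K / e)) ler_ln ?posrE ?expR_gt0 //.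
  apply: le_trans (ltW (truncnS_gt _)) _.
  by rewrite ler_nat /n leq_max leqnn orbT.
apply: le_trans (_ : (L - K / ln (n%:R : RR))%:E + e%:E <= _)%E.
  by rewrite -EFinD lee_fin -addrA lerDl addrC subr_ge0.
apply: leeD2r; apply: le_trans (h _ hn4) _.
by apply: ereal_sup_ubound; exists n.
Qed.


Lemma growth_real (P : nat -> nat) (c d : RR) : 0 < c ->
  (forall m, (1 <= m)%N ->
     c * powR (m%:R) d * ((m.+1)%:R ^+ 2) / 2 <= ((P (m + m.+1)%N)%:R : RR)) ->
  (forall n N, (n <= N)%N -> (P n <= P N)%N) ->
  exists K, forall N, (4 <= N)%N ->
    (d + 2) - K / ln (N%:R : RR) <= ln ((P N)%:R : RR) / ln (N%:R : RR).
Proof.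
move=> c0 hP hmono.
exists (ln 2 - ln c + `|d| * ln 4 + 2 * ln 2) => N hN.
pose m := (N.-1 %/ 2)%N.
have [hm1 hmN hN4 hN2] : [/\ (1 <= m)%N, (m + m.+1 <= N)%N, (N <= 4 * m)%N & (N <= 2 * m.+1)%N].
  by rewrite /m; split; lia.
have mpos : (0 : RR) < m%:R by rewrite ltr0n.
have m1pos : (0 : RR) < m.+1%:R by rewrite ltr0n.
have Npos : (0 : RR) < N%:R by rewrite ltr0n; lia.
have lnN : (0 : RR) < ln (N%:R : RR) by apply: ln_gt0; rewrite ltr1n; lia.
have powpos : (0 : RR) < powR (m%:R) d by apply: powR_gt0.
have Q0 : (0 : RR) < c * powR (m%:R) d * ((m.+1)%:R ^+ 2) / 2.
  by apply: divr_gt0 => //; apply: mulr_gt0; [apply: mulr_gt0|apply: exprn_gt0].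
have hPN : c * powR (m%:R) d * ((m.+1)%:R ^+ 2) / 2 <= ((P N)%:R : RR).
  by apply: le_trans (hP _ hm1) _; rewrite ler_nat; apply: hmono.
have PNpos : (0 : RR) < (P N)%:R by apply: lt_le_trans hPN.
have hlnP : ln (c * powR (m%:R) d * ((m.+1)%:R ^+ 2) / 2) <= ln ((P N)%:R : RR).
  by rewrite ler_ln ?posrE.
have e1 : ln (c * powR (m%:R) d * ((m.+1)%:R ^+ 2) / 2) =
    ln c + d * ln (m%:R : RR) + 2 * ln (m.+1%:R : RR) - ln 2.
  rewrite lnM ?posrE ?invr_gt0 //; last by apply: mulr_gt0; [apply: mulr_gt0|apply: exprn_gt0].
  rewrite lnV ?posrE // lnM ?posrE ?exprn_gt0 //; last by apply: mulr_gt0.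
  by rewrite lnM ?posrE // ln_powR lnXn // mulr_natl.
rewrite e1 in hlnP.
have h1 : ln (m%:R : RR) <= ln (N%:R : RR).
  by rewrite ler_ln ?posrE // ler_nat; lia.
have h2 : ln (N%:R : RR) <= ln 4 + ln (m%:R : RR).
  rewrite -lnM ?posrE // ler_ln ?posrE ?mulr_gt0 //.
  by rewrite -natrM ler_nat.
have h3 : ln (N%:R : RR) <= ln 2 + ln (m.+1%:R : RR).
  rewrite -lnM ?posrE // ler_ln ?posrE ?mulr_gt0 //.
  by rewrite -natrM ler_nat.
have h4 : - (`|d| * ln 4) <= d * (ln (m%:R : RR) - ln (N%:R : RR)).
  have := ler_norm (- (d * (ln (m%:R : RR) - ln (N%:R : RR)))).
  rewrite normrN normrM => h5.
  have h6 : `|ln (m%:R : RR) - ln (N%:R : RR)| <= ln 4.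
    rewrite distrC ger0_norm; first lra.
    lra.
  have := ler_wpM2l (normr_ge0 d) h6; lra.
have lnc : ln c = ln c by [].
rewrite ler_pdivlMr // mulrBl divfK ?gt_eqF // mulrDl.
rewrite mulrBr in h4.
lra.
Qed.

End PAn.
Import PAn.

Module PMain.
#[local] Set Implicit Arguments. #[local] Unset Strict Implicit. #[local] Unset Printing Implicit Defensive.
Import Order.TTheory GRing.Theory Num.Theory.
Local Open Scope classical_set_scope.
Local Open Scope ring_scope.
Lemma W_sum (k : fieldType) (B : lalgType k) (s : seq B) n N v : (n <= N)%N ->
  sp (words s n) v -> sp (flatten [seq words s i | i <- iota 0 N.+1]) v.
Proof.
move=> hn; apply: sp_sub => u hu; apply: sp_mem; apply/flatten_mapP.
by exists n => //; rewrite mem_iota add0n ltnS.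
Qed.

Lemma sumpow_mono (k : fieldType) (B : lalgType k) (s : seq B) n N : (n <= N)%N ->
  (fdim (sumpow s n) <= fdim (sumpow s N))%N.
Proof.
move=> hn; apply: fdim_mono => u0; apply: sp_sub => u /flatten_mapP [i hi hu].
apply: sp_mem; apply/flatten_mapP; exists i => //.
move: hi; rewrite !mem_iota !add0n; lia.
Qed.

Lemma sum_sq (n : nat) : (n ^ 2 <= 2 * \sum_(j < n) j.+1)%N.
Proof.
elim: n => [|n IH]; first by [].
rewrite big_ord_recr /=. move: IH; set S := \sum_(_ < _) _. rewrite !expnS !expn0 !muln1 => IH. nia.
Qed.


End PMain.
Import PMain.

Import Order.TTheory.

Theorem lemma2p3 (k : fieldType) (D : comAlgType k)
  (sigma : {lrmorphism D -> D}) (sigmainv : D -> D)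
  (sigmaK : cancel sigma sigmainv) (sigmainvK : cancel sigmainv sigma)
  (a : D) (B : algType k) (iota : {lrmorphism D -> B}) (x y : B) :
  sensitive_multiplicity D ->
  ~ locally_algebraic sigma ->
  is_GWA sigma sigmainv a iota x y ->
  (GKdim B >= GKdim D + 2%:E)%E.
Proof.
move=> [v0 [c [d [c0 [hGK hSM]]]]] hNLA [hrel huniv].
pose hinv := good_sigmainv sigmaK sigmainvK.
have rels := gwa_rels a hinv sigmaK sigmainvK.
case: (huniv _ _ _ _ rels) => [[g [giota [gx _]]] _].
have hx : forall d, x * iota d = iota (sigma d) * x by case: hrel.
have [s0 hs0] : exists s0 : seq D, forall t : seq D,
    (forall v, v \in s0 -> sp t v) -> (forall v, sp t v -> sp t (sigma v)) -> False.
  case: (pselect (exists s0 : seq D, forall t : seq D,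
    (forall v, v \in s0 -> sp t v) -> (forall v, sp t v -> sp t (sigma v)) -> False)) => // hn.
  exfalso; apply: hNLA => s0.
  case: (pselect (exists t : seq D, (span s0 `<=` span t)%classic /\
     (forall v, span t v -> span t (sigma v)))) => // hnt.
  exfalso; apply: hn; exists s0 => t h1 h2; apply: hnt; exists t; split.
    by move=> v; rewrite !spanE; apply: sp_sub.
  by move=> v; rewrite !spanE; apply: h2.
pose uU := 1 :: v0 ++ s0.
have h1 : 1 \in uU by rewrite inE eqxx.
have hs0u : forall v, v \in s0 -> v \in uU.
  by move=> v hv; rewrite inE mem_cat hv !orbT.
have hv0u : forall v, v \in v0 -> v \in uU.
  by move=> v hv; rewrite inE mem_cat hv orbT.
pose LL := L sigma uU.
have hSMj : forall j m, c * (fdim (span (LL j)))%:R * powR (m%:R) d <=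
    (fdim (powsp (LL j) m))%:R.
  move=> j m; apply: hSM; exists 1; split.
    by move=> b hb; rewrite mul1r mulr1.
  by move=> v hv; rewrite mulr1 spanE; apply: uU_L; apply: hv0u.
have [bs hbs] : exists bs : nat * nat -> seq D, forall mj, [/\ free (bs mj),
    size (bs mj) = fdim (powsp (LL mj.2) mj.1) &
    forall v, sp (bs mj) v <-> sp (words (LL mj.2) mj.1) v].
  have hc : forall mj : nat * nat, exists b, [/\ free b,
    size b = fdim (powsp (LL mj.2) mj.1) &
    forall v, sp b v <-> sp (words (LL mj.2) mj.1) v].
    by move=> mj; exact: fdim_ex.
  by case: (boolp.choice hc) => f hf; exists f.
pose sB := sB iota x uU.
pose P := fun N => fdim (sumpow sB N).
have hdim : forall m, (\sum_(j < m.+1) fdim (powsp (LL j) m) <= P (m + m.+1))%N.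
  move=> m.
  pose bm := fun j => bs (m, j).
  have -> : (\sum_(j < m.+1) fdim (powsp (LL j) m))%N = size (T iota x bm m.+1).
    by rewrite size_T; apply: eq_bigr => j _; case: (hbs (m, nat_of_ord j)).
  apply: fdim_ge.
    apply: (free_T (psiD sigma g) (psiZ sigma g) (psi_phi sigmainvK giota gx)).
    by move=> j; case: (hbs (m, j)).
  move=> v hv; apply: (W_sum (leqnn _)).
  apply: (T_W hx h1 _ hv) => j w hw.
  by case: (hbs (m, j)) => _ _ e; apply/e; apply: sp_mem.
have hreal : forall m, (1 <= m)%N ->
    c * powR (m%:R) d * ((m.+1)%:R ^+ 2) / 2 <= ((P (m + m.+1)%N)%:R : RR).
  move=> m hm.
  have pge0 : (0 : RR) <= powR (m%:R) d by apply: powR_ge0.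
  apply: le_trans (_ : \sum_(j < m.+1) c * (j.+1)%:R * powR (m%:R) d <= _).
    have -> : \sum_(j < m.+1) c * (j.+1)%:R * powR (m%:R) d =
        c * powR (m%:R) d * (\sum_(j < m.+1) j.+1)%:R.
      by rewrite natr_sum mulr_sumr; apply: eq_bigr => j _; rewrite mulrAC.
    rewrite -mulrA ler_wpM2l ?mulr_ge0 ?(ltW c0) // ler_pdivrMr // mulrC.
    by rewrite -natrX -natrM ler_nat sum_sq.
  apply: le_trans (_ : \sum_(j < m.+1) ((fdim (powsp (LL j) m))%:R : RR) <= _).
    apply: ler_sum => j _; apply: le_trans (hSMj j m).
    rewrite ler_wpM2r // ler_wpM2l ?(ltW c0) // ler_nat.
    exact: (fdim_L h1 hs0u hs0).
  by rewrite -natr_sum ler_nat hdim.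
have [K hK] := growth_real c0 hreal (fun n N h => sumpow_mono sB h).
rewrite hGK -EFinD.
apply: le_trans (_ : ((d + 2)%:E <= limn_esup (growth_log sB))%E) _.
  by apply: (limsup_lb (K := K)) => N hN; rewrite /growth_log lee_fin; apply: hK.
by apply: ereal_sup_ubound; exists sB.
Qed.
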